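(* Let $R\in\{\mathrm{ML},\mathrm{wML},\mathrm{C},\mathrm{S}\}$, let $p,q\in[0,1]$ be real numbers with $p<q$, let $I\in\mathscr I$ be an interval forecast with $I\subseteq(0,1)$, let $\mathscr S$ be a countable set of selection processes with $\mathscr S\supseteq\mathscr S^{p,q}_{\mathscr F_R}$, and let $\varpi\in\Omega$ be a path that is $\mathscr S$-random for $I$. Then a path $\omega\in\Omega$ is $R$-random for $\varphi^{\varpi}_{p,q}$ if and only if it is $R$-random for $[p,q]$.
   Context: Notation: $\mathbb N=\{1,2,\dots\}$, $\mathbb N_0=\mathbb N\cup\{0\}$. $\Omega=\{0,1\}^{\mathbb N}$ is the set of paths $\omega=(\omega_1,\omega_2,\dots)$; $\omega_{1:n}=(\omega_1,\dots,\omega_n)$ and $\omega_{1:0}=\square$ (the empty sequence). $\mathbb S=\bigcup_{n\in\mathbb N_0}\{0,1\}^n$ is the set of situations, $|s|$ the length of $s$, $sx$ the concatenation. $\mathscr I$ is the set of closed intervals $I\subseteq[0,1]$ (singletons $[r,r]$ are identified with $r$). For $r\in[0,1]$ and $f:\{0,1\}\to\mathbb R$, $E_r(f)=rf(1)+(1-r)f(0)$; for $I\in\mathscr I$, $\overline E_I(f)=\max_{r\in I}E_r(f)$. A forecasting system is a map $\varphi:\mathbb S\to\mathscr I$; $\underline\varphi(s)=\min\varphi(s)$, $\overline\varphi(s)=\max\varphi(s)$; a stationary (constant) forecasting system with value $I$ is identified with $I$. A real process is a map $F:\mathbb S\to\mathbb R$; $\Delta F(s)$ is the function $x\mapsto F(sx)-F(s)$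 on $\{0,1\}$. $M$ is a supermartingale for $\varphi$ if $\overline E_{\varphi(s)}(\Delta M(s))\le0$ for all $s\in\mathbb S$. A test process is a non-negative real process $F$ with $F(\square)=1$; a test supermartingale for $\varphi$ is a test process that is a supermartingale for $\varphi$. A multiplier process $D$ assigns to each $s\in\mathbb S$ a function $D(s):\{0,1\}\to[0,\infty)$; it generates the test process $F$ with $F(\square)=1$ and $F(sx)=F(s)D(s)(x)$. Computability: a map from a countable effectively encoded domain $\mathscr D$ (e.g. $\mathbb N_0$, $\mathbb S$, $\mathbb S\times\mathbb N_0$, $\mathbb S\times\{0,1\}\times\mathbb N_0$) to $\mathbb N_0$ or $\mathbb Q$ is recursive if it is computable by a Turing machine. A real map $r$ on $\mathscr D$ is lower semicomputable if there is a recursive rational map $q$ on $\mathscr D\times\mathbb N_0$ with $q(d,n)\le q(d,n+1)$ and $r(d)=\lim_n q(d,n)$ for all $d,n$; it is computable if there is a recursive rational $q$ with $|r(d)-q(d,n)|<2^{-n}$ for all $d,n$. A multiplier process is lower semicomputable if $(s,x)\mapsto D(s)(x)$ is. $\mathscr F_{\mathrm{ML}}$ is the set of lower semicomputable test processes, $\mathscr F_{\mathrm{wML}}$ the set of test processes generated by lower semicomputable multiplier processes, and $\mathscr F_{\mathrm C}=\mathscr F_{\mathrm S}$ the set of positive, rational-valued, recursive test processes. For $R\in\{\mathrm{ML},\mathrm{wML},\mathrm C,\mathrm S\}$, $\overline{\mathbb T}_R(\varphi)$ is the set of elements of $\mathscr F_R$ that are test supermartingales for $\varphi$. For $R\in\{\mathrm{ML},\mathrm{wML},\mathrm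 C\}$, a path $\omega$ is $R$-random for $\varphi$ if no $T\in\overline{\mathbb T}_R(\varphi)$ has $\limsup_{n\to\infty}T(\omega_{1:n})=\infty$. A real growth function is a computable, non-decreasing, unbounded map $\tau:\mathbb N_0\to[0,\infty)$; $\omega$ is S-random for $\varphi$ if there are no $T\in\overline{\mathbb T}_{\mathrm S}(\varphi)$ and real growth function $\tau$ with $\limsup_{n\to\infty}[T(\omega_{1:n})-\tau(n)]\ge0$. $R$-random for $I\in\mathscr I$ means $R$-random for the stationary forecasting system with value $I$. Selection processes: a selection process is a map $S:\mathbb S\to\{0,1\}$; it is temporal if $S(s)$ depends only on $|s|$ (written $S(n)$). For a countable set $\mathscr S$ of selection processes, a path $\omega$ is $\mathscr S$-random for $\varphi$ if for every $S\in\mathscr S$ with $\lim_{n}\sum_{k=0}^{n-1}S(\omega_{1:k})=\infty$ we have $\liminf_{n}\frac{\sum_{k=0}^{n-1}S(\omega_{1:k})[\omega_{k+1}-\underline\varphi(\omega_{1:k})]}{\sum_{k=0}^{n-1}S(\omega_{1:k})}\ge0$ and $\limsup_{n}\frac{\sum_{k=0}^{n-1}S(\omega_{1:k})[\omega_{k+1}-\overline\varphi(\omega_{1:k})]}{\sum_{k=0}^{n-1}S(\omega_{1:k})}\le0$. Special objects: for a real process $F$ and $r\in[0,1]$, $S^r_F$ is the temporal selection process with $S^r_F(n)=1$ if $E_r(\Delta F(s))>0$ for some $s$ with $|s|=n$, and $S^r_F(n)=0$ otherwise. For a countable set $\mathscr F$ of real processes, $\mathscr S^{p,q}_{\mathscr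 F}=\{S^r_F: F\in\mathscr F,\ r\in\{p,q\}\}$. For $p,q\in[0,1]$ and $\varpi\in\Omega$, $\varphi^\varpi_{p,q}$ is the precise forecasting system with $\varphi^\varpi_{p,q}(s)=p$ if $\varpi_{|s|+1}=0$ and $\varphi^\varpi_{p,q}(s)=q$ if $\varpi_{|s|+1}=1$. *)

(* Defs.v *)
From Stdlib Require Import Reals QArith Qreals List ClassicalEpsilon.
Import ListNotations.
Open Scope R_scope.

(* Computability: partial (mu-)recursive functions nat -> nat, in the *)
(* Kleene-style basis with Cantor pairing. Equivalent to Turing       *)
(* computability.                                                     *)

Definition cpair (a b : nat) : nat := ((a + b) * (a + b + 1) / 2 + b)%nat.

Inductive rcode : Type :=
| cZero : rcode
| cSucc : rcode
| cFst : rcode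
| cSnd : rcode
| cPair : rcode -> rcode -> rcode
| cComp : rcode -> rcode -> rcode
| cPrim : rcode -> rcode -> rcode
| cMu : rcode -> rcode.

Inductive reval : rcode -> nat -> nat -> Prop :=
| eZero x : reval cZero x 0
| eSucc x : reval cSucc x (S x)
| eFst a b : reval cFst (cpair a b) a
| eSnd a b : reval cSnd (cpair a b) b
| ePair f g x a b : reval f x a -> reval g x b -> reval (cPair f g) x (cpair a b)
| eComp f g x y z : reval g x y -> reval f y z -> reval (cComp f g) x z
| ePrim0 f g x y : reval f x y -> reval (cPrim f g) (cpair x 0) y
| ePrimS f g x n y z :
    reval (cPrim f g) (cpair x n) y -> reval g (cpair x (cpair n y)) z ->
    reval (cPrim f g) (cpair x (S n)) z
| eMu f x n :
    reval f (cpair x n) 0 ->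
    (forall m, (m < n)%nat -> exists k, k <> 0%nat /\ reval f (cpair x m) k) ->
    reval (cMu f) x n.

Definition recursive_nat (f : nat -> nat) : Prop :=
  exists c, forall x, reval c x (f x).

(* Situations: bijective base-2 numeration (digits 1,2). *)
Definition enc_sit (s : list bool) : nat :=
  fold_left (fun acc (b : bool) => (2 * acc + 1 + (if b then 1 else 0))%nat) s 0%nat.
Definition b2n (b : bool) : nat := if b then 1%nat else 0%nat.
Definition enc_sit_nat (sn : list bool * nat) : nat := cpair (enc_sit (fst sn)) (snd sn).
Definition enc_sx (sx : list bool * bool) : nat := cpair (enc_sit (fst sx)) (b2n (snd sx)).
Definition enc_sx_nat (sxn : (list bool * bool) * nat) : nat :=
  cpair (enc_sx (fst sxn)) (snd sxn).
Definition enc_nat_nat (mn : nat * nat) : nat := cpair (fst mn) (snd mn).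

Definition recursive_map {D : Type} (enc : D -> nat) (f : D -> nat) : Prop :=
  exists g, recursive_nat g /\ forall d, f d = g (enc d).

Definition recursive_Q {D : Type} (enc : D -> nat) (q : D -> Q) : Prop :=
  exists a b c : nat -> nat,
    recursive_nat a /\ recursive_nat b /\ recursive_nat c /\
    forall d, Qeq (q d)
      (Qmake (Z.of_nat (a (enc d)) - Z.of_nat (b (enc d)))%Z
             (Pos.of_succ_nat (c (enc d)))).

Definition lower_semicomputable {D : Type} (enc : D -> nat) (r : D -> R) : Prop :=
  exists q : D -> nat -> Q,
    recursive_Q (fun dn : D * nat => cpair (enc (fst dn)) (snd dn))
                (fun dn => q (fst dn) (snd dn)) /\
    (forall d n, Qle (q d n) (q d (S n))) /\
    (forall d, Un_cv (fun n => Q2R (q d n)) (r d)).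

Definition computable_real {D : Type} (enc : D -> nat) (r : D -> R) : Prop :=
  exists q : D -> nat -> Q,
    recursive_Q (fun dn : D * nat => cpair (enc (fst dn)) (snd dn))
                (fun dn => q (fst dn) (snd dn)) /\
    (forall d n, Rabs (r d - Q2R (q d n)) < / 2 ^ n).

(* A path omega = (omega_1, omega_2, ...) is represented by w : nat -> bool
   with omega_{k+1} = w k. *)
Definition path := nat -> bool.
Definition sit := list bool.

Definition prefix (w : path) (n : nat) : sit := map w (seq 0 n).

(* closed intervals [ilo, ihi]; singleton [r,r] identified with r *)
Record interval := mkI { ilo : R ; ihi : R }.
Definition is_interval (I : interval) : Prop :=
  0 <= ilo I /\ ilo I <= ihi I /\ ihi I <= 1.

Definition fsystem := sit -> interval.

Definition b2R (b : bool) : R := if b then 1 else 0.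

Definition Ex (r : R) (f : bool -> R) : R := r * f true + (1 - r) * f false.

Definition process := sit -> R.

Definition Delta (F : process) (s : sit) : bool -> R :=
  fun x => F (s ++ [x]) - F s.

(* upper expectation max_{r in I} E_r(f) <= 0, written out *)
Definition supermartingale (phi : fsystem) (M : process) : Prop :=
  forall s r, ilo (phi s) <= r <= ihi (phi s) -> Ex r (Delta M s) <= 0.

Definition test_process (F : process) : Prop :=
  (forall s, 0 <= F s) /\ F [] = 1.

Inductive rtype := rML | rwML | rC | rS.

Definition in_F (Rt : rtype) (F : process) : Prop :=
  match Rt with
  | rML => test_process F /\ lower_semicomputable enc_sit F
  | rwML => test_process F /\
      exists D : sit -> bool -> R,
        (forall s x, 0 <= D s x) /\
        lower_semicomputable enc_sx (fun sx => D (fst sx) (snd sx)) /\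
        (forall s x, F (s ++ [x]) = F s * D s x)
  | rC | rS => test_process F /\ (forall s, 0 < F s) /\
      exists q : sit -> Q, recursive_Q enc_sit q /\ forall s, F s = Q2R (q s)
  end.

Definition test_supermartingales (Rt : rtype) (phi : fsystem) (T : process) : Prop :=
  in_F Rt T /\ supermartingale phi T.

Definition growth_function (tau : nat -> R) : Prop :=
  computable_real (fun n : nat => n) tau /\
  (forall n, 0 <= tau n) /\
  (forall n m, (n <= m)%nat -> tau n <= tau m) /\
  (forall B, exists n, B < tau n).

Definition random (Rt : rtype) (phi : fsystem) (w : path) : Prop :=
  match Rt with
  | rS => ~ exists T tau,
      test_supermartingales rS phi T /\ growth_function tau /\
      (forall eps N, 0 < eps -> exists n, (N <= n)%nat /\ - eps < T (prefix w n) - tau n)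
  | _ => ~ exists T,
      test_supermartingales Rt phi T /\
      (forall B N, exists n, (N <= n)%nat /\ B < T (prefix w n))
  end.

Definition selection := sit -> bool.

Fixpoint rsum (f : nat -> R) (n : nat) : R :=
  match n with O => 0 | S k => rsum f k + f k end.

Definition countable_set (Ss : selection -> Prop) : Prop :=
  exists e : nat -> selection, forall Sl, Ss Sl -> exists n, e n = Sl.

Definition sel_random (Ss : selection -> Prop) (phi : fsystem) (w : path) : Prop :=
  forall Sl, Ss Sl ->
    let cnt := rsum (fun k => b2R (Sl (prefix w k))) in
    (forall B, exists N, forall n, (N <= n)%nat -> B < cnt n) ->
    (forall eps, 0 < eps -> exists N, forall n, (N <= n)%nat ->
        - eps < rsum (fun k => b2R (Sl (prefix w k)) *
                                 (b2R (w k) - ilo (phi (prefix w k)))) n / cnt n) /\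
    (forall eps, 0 < eps -> exists N, forall n, (N <= n)%nat ->
        rsum (fun k => b2R (Sl (prefix w k)) *
                         (b2R (w k) - ihi (phi (prefix w k)))) n / cnt n < eps).

Definition SrF (F : process) (r : R) : selection :=
  fun s => if excluded_middle_informative
                (exists s' : sit, length s' = length s /\ 0 < Ex r (Delta F s'))
           then true else false.

Definition Spq (Rt : rtype) (p q : R) (Sl : selection) : Prop :=
  exists F r, in_F Rt F /\ (r = p \/ r = q) /\ Sl = SrF F r.

Definition stationary (I : interval) : fsystem := fun _ => I.

Definition phi_pq (varpi : path) (p q : R) : fsystem :=
  fun s => if varpi (length s) then mkI q q else mkI p p.

(* Main.v *)
From Pilot Require Import Defs.
From Stdlib Require Import Reals QArith Qreals List ClassicalEpsilon.
Open Scope R_scope.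
From Stdlib Require Import Lia Lra Arith Classical.
Import ListNotations.
Import Pilot.Defs.
Close Scope R_scope.

Lemma even_ss s : exists t, (s * (s + 1) = 2 * t)%nat.
Proof.
  induction s as [|s [t Ht]]. exists 0%nat; lia.
  exists (t + s + 1)%nat. nia.
Qed.

Lemma cpair2 a b : (2 * cpair a b = (a+b)*(a+b+1) + 2*b)%nat.
Proof.
  unfold cpair. destruct (even_ss (a+b)) as [t Ht]. rewrite Ht.
  rewrite (Nat.mul_comm 2 t), Nat.div_mul by lia. lia.
Qed.

Lemma cpair_surj x : exists a b, x = cpair a b.
Proof.
  induction x as [|x [a [b ->]]].
  - exists 0%nat, 0%nat. reflexivity.
  - destruct a as [|a].
    + exists (S b), 0%nat. pose proof (cpair2 0 b). pose proof (cpair2 (S b) 0). nia.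
    + exists a, (S b). pose proof (cpair2 (S a) b). pose proof (cpair2 a (S b)).
      replace (a + S b)%nat with (S a + b)%nat in * by lia. lia.
Qed.

Lemma cpair_inj a b a' b' : cpair a b = cpair a' b' -> a = a' /\ b = b'.
Proof.
  intro H. pose proof (cpair2 a b). pose proof (cpair2 a' b').
  assert (a + b = a' + b')%nat.
  { destruct (Nat.lt_total (a+b) (a'+b')) as [Hl|[Hl|Hl]]; auto.
    - exfalso. assert ((a+b+1)*(a+b+2) <= (a'+b')*(a'+b'+1))%nat by (apply Nat.mul_le_mono; lia). nia.
    - exfalso. assert ((a'+b'+1)*(a'+b'+2) <= (a+b)*(a+b+1))%nat by (apply Nat.mul_le_mono; lia). nia. }
  rewrite H2 in H0. lia.
Qed.

Definition unp (x : nat) : {pr : nat * nat | x = cpair (fst pr) (snd pr)}.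
Proof.
  apply constructive_indefinite_description.
  destruct (cpair_surj x) as [a [b H]]. exists (a, b). exact H.
Defined.
Definition pi1 x := fst (proj1_sig (unp x)).
Definition pi2 x := snd (proj1_sig (unp x)).
Lemma pi_spec x : x = cpair (pi1 x) (pi2 x).
Proof. unfold pi1, pi2. exact (proj2_sig (unp x)). Qed.
Lemma pi1_pair a b : pi1 (cpair a b) = a.
Proof. pose proof (pi_spec (cpair a b)). apply cpair_inj in H. destruct H; auto. Qed.
Lemma pi2_pair a b : pi2 (cpair a b) = b.
Proof. pose proof (pi_spec (cpair a b)). apply cpair_inj in H. destruct H; auto. Qed.

Definition comp1 (c : rcode) (f : nat -> nat) := forall x, reval c x (f x).

Lemma comp_ext c f g : comp1 c f -> (forall x, f x = g x) -> comp1 c g.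
Proof. intros H E x. rewrite <- E. apply H. Qed.

Lemma comp_zero : comp1 cZero (fun _ => 0%nat).
Proof. intro; constructor. Qed.
Lemma comp_succ : comp1 cSucc S.
Proof. intro; constructor. Qed.
Lemma comp_fst : comp1 cFst pi1.
Proof. intro x. pose proof (eFst (pi1 x) (pi2 x)) as H. rewrite <- pi_spec in H. exact H. Qed.
Lemma comp_snd : comp1 cSnd pi2.
Proof. intro x. pose proof (eSnd (pi1 x) (pi2 x)) as H. rewrite <- pi_spec in H. exact H. Qed.
Lemma comp_pair f g F G : comp1 f F -> comp1 g G -> comp1 (cPair f g) (fun x => cpair (F x) (G x)).
Proof. intros H1 H2 x. constructor; auto. Qed.
Lemma comp_comp f g F G : comp1 f F -> comp1 g G -> comp1 (cComp f g) (fun x => F (G x)).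
Proof. intros H1 H2 x. econstructor; eauto. Qed.

Definition cId := cPair cFst cSnd.
Lemma comp_id : comp1 cId (fun x => x).
Proof. eapply comp_ext. apply comp_pair; [apply comp_fst|apply comp_snd]. intro; symmetry; apply pi_spec. Qed.

Fixpoint prf (F G : nat -> nat) (x n : nat) : nat :=
  match n with O => F x | S m => G (cpair x (cpair m (prf F G x m))) end.

Lemma reval_prim f g F G : comp1 f F -> comp1 g G ->
  forall x n, reval (cPrim f g) (cpair x n) (prf F G x n).
Proof. intros H1 H2 x n. induction n; simpl; econstructor; eauto. Qed.

Lemma comp_prim f g F G h1 h2 H1 H2 : comp1 f F -> comp1 g G -> comp1 h1 H1 -> comp1 h2 H2 ->
  comp1 (cComp (cPrim f g) (cPair h1 h2)) (fun x => prf F G (H1 x) (H2 x)).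
Proof. intros A B C D x. econstructor. apply comp_pair; eauto. apply reval_prim; auto. Qed.

Definition cY := cComp cSnd cSnd.
Definition cN := cComp cFst cSnd.
Lemma comp_Y : comp1 cY (fun z => pi2 (pi2 z)).
Proof. apply comp_comp; [apply comp_snd|apply comp_snd]. Qed.
Lemma comp_N : comp1 cN (fun z => pi1 (pi2 z)).
Proof. apply comp_comp; [apply comp_fst|apply comp_snd]. Qed.

Fixpoint cConst (k : nat) : rcode := match k with O => cZero | S k => cComp cSucc (cConst k) end.
Lemma comp_const k : comp1 (cConst k) (fun _ => k).
Proof. induction k; simpl. apply comp_zero. apply (comp_comp _ _ S (fun _ => k)); auto. apply comp_succ. Qed.

Definition cPred := cComp (cPrim cZero cN) (cPair cZero cId).
Lemma comp_pred : comp1 cPred Nat.pred.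
Proof.
  eapply comp_ext. apply comp_prim; [apply comp_zero|apply comp_N|apply comp_zero|apply comp_id].
  intro x. destruct x; simpl; auto. rewrite pi2_pair, pi1_pair. auto.
Qed.

Lemma comp_prim2 f g F G h1 h2 H1 H2 (Hop : nat -> nat -> nat) :
  comp1 f F -> comp1 g G -> comp1 h1 H1 -> comp1 h2 H2 ->
  (forall a b, prf F G a b = Hop a b) ->
  comp1 (cComp (cPrim f g) (cPair h1 h2)) (fun x => Hop (H1 x) (H2 x)).
Proof. intros A B C D E. eapply comp_ext. apply (comp_prim f g F G h1 h2 H1 H2); auto. intro; simpl; auto. Qed.

Definition cAdd h1 h2 := cComp (cPrim cId (cComp cSucc cY)) (cPair h1 h2).
Lemma comp_add h1 h2 H1 H2 : comp1 h1 H1 -> comp1 h2 H2 -> comp1 (cAdd h1 h2) (fun x => (H1 x + H2 x)%nat).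
Proof.
  intros. apply comp_prim2 with (F := fun x => x) (G := fun z => S (pi2 (pi2 z))); auto.
  apply comp_id. apply comp_comp. apply comp_succ. apply comp_Y.
  intros a b; induction b; simpl; auto. rewrite !pi2_pair. lia.
Qed.

Definition cSub h1 h2 := cComp (cPrim cId (cComp cPred cY)) (cPair h1 h2).
Lemma comp_sub h1 h2 H1 H2 : comp1 h1 H1 -> comp1 h2 H2 -> comp1 (cSub h1 h2) (fun x => (H1 x - H2 x)%nat).
Proof.
  intros. apply comp_prim2 with (F := fun x => x) (G := fun z => Nat.pred (pi2 (pi2 z))); auto.
  apply comp_id. apply comp_comp. apply comp_pred. apply comp_Y.
  intros a b; induction b; simpl. lia. rewrite !pi2_pair. lia.
Qed.

Definition cCond t a b := cComp (cPrim a (cComp b cFst)) (cPair cId t).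
Lemma comp_cond t a b T A B : comp1 t T -> comp1 a A -> comp1 b B ->
  comp1 (cCond t a b) (fun x => match T x with O => A x | S _ => B x end).
Proof.
  intros. eapply comp_ext. apply comp_prim with (G := fun z => B (pi1 z)); eauto.
  apply comp_comp; auto. apply comp_fst. apply comp_id.
  intro x. simpl. destruct (T x); simpl; auto. rewrite pi1_pair; auto.
Qed.

Fixpoint cMul h k := match k with O => cZero | S k => cAdd (cMul h k) h end.
Lemma comp_mul h H k : comp1 h H -> comp1 (cMul h k) (fun x => (H x * k)%nat).
Proof.
  intro Hh. induction k; simpl. eapply comp_ext. apply comp_zero. intro; cbv beta; lia.
  eapply comp_ext. apply comp_add; eauto. intro; cbv beta; lia.
Qed.

Definition cDist h1 h2 := cAdd (cSub h1 h2) (cSub h2 h1).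
Lemma comp_dist h1 h2 H1 H2 : comp1 h1 H1 -> comp1 h2 H2 ->
  comp1 (cDist h1 h2) (fun x => (H1 x - H2 x + (H2 x - H1 x))%nat).
Proof. intros. apply comp_add; apply comp_sub; auto. Qed.

Definition hstep z := match pi2 (pi2 (pi2 z)) with
  | O => cpair (pi1 (pi2 (pi2 z))) 1 | S _ => cpair (S (pi1 (pi2 (pi2 z)))) 0 end.
Definition cStep := cCond (cComp cSnd cY) (cPair (cComp cFst cY) (cConst 1))
                          (cPair (cComp cSucc (cComp cFst cY)) cZero).
Lemma comp_step : comp1 cStep hstep.
Proof.
  apply comp_cond. apply comp_comp. apply comp_snd. apply comp_Y.
  apply comp_pair. apply comp_comp. apply comp_fst. apply comp_Y. apply comp_const.
  apply comp_pair. apply comp_comp. apply comp_succ. apply comp_comp. apply comp_fst. apply comp_Y.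
  apply comp_zero.
Qed.
Definition hdf x := prf (fun _ => 0%nat) hstep 0 x.
Definition cHD := cComp (cPrim cZero cStep) (cPair cZero cId).
Lemma comp_hd : comp1 cHD hdf.
Proof. apply comp_prim. apply comp_zero. apply comp_step. apply comp_zero. apply comp_id. Qed.

Lemma hdf_S x : hdf (S x) = hstep (cpair 0 (cpair x (hdf x))).
Proof. reflexivity. Qed.
Lemma hstep_0 a n : hstep (cpair 0 (cpair n (cpair a 0))) = cpair a 1.
Proof. unfold hstep. rewrite !pi2_pair, !pi1_pair. reflexivity. Qed.
Lemma hstep_1 a n : hstep (cpair 0 (cpair n (cpair a 1))) = cpair (S a) 0.
Proof. unfold hstep. rewrite !pi2_pair, !pi1_pair. reflexivity. Qed.

Lemma hdf_even a : hdf (2*a) = cpair a 0 /\ hdf (S (2*a)) = cpair a 1.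
Proof.
  induction a as [|a [IH1 IH2]].
  - assert (E : hdf 0 = cpair 0 0) by reflexivity. split; auto. simpl (2*0)%nat. rewrite hdf_S, E, hstep_0. auto.
  - replace (2 * S a)%nat with (S (S (2*a))) by lia.
    assert (E2 : hdf (S (S (2*a))) = cpair (S a) 0).
    { rewrite hdf_S, IH2, hstep_1. auto. }
    split; auto. rewrite hdf_S, E2, hstep_0. auto.
Qed.

Definition parent x := pi1 (hdf (Nat.pred x)).
Definition cParent := cComp cFst (cComp cHD cPred).
Lemma comp_parent : comp1 cParent parent.
Proof. exact (comp_comp _ _ pi1 (fun x => hdf (Nat.pred x)) comp_fst (comp_comp _ _ hdf Nat.pred comp_hd comp_pred)). Qed.

Lemma enc_snoc s b : enc_sit (s ++ [b]) = (2 * enc_sit s + 1 + b2n b)%nat.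
Proof. unfold enc_sit. rewrite fold_left_app. simpl. destruct b; simpl; lia. Qed.

Lemma parent_enc s b : parent (enc_sit (s ++ [b])) = enc_sit s.
Proof.
  unfold parent. rewrite enc_snoc. destruct (hdf_even (enc_sit s)) as [H1 H2].
  destruct b; unfold b2n.
  - replace (Nat.pred (2 * enc_sit s + 1 + 1)) with (S (2 * enc_sit s)) by lia. rewrite H2, pi1_pair; auto.
  - replace (Nat.pred (2 * enc_sit s + 1 + 0)) with (2 * enc_sit s)%nat by lia. rewrite H1, pi1_pair; auto.
Qed.
Lemma parent0 : parent 0 = 0%nat.
Proof. unfold parent. simpl. destruct (hdf_even 0) as [H _]. simpl in H. rewrite H, pi1_pair. auto. Qed.

Lemma enc_len s : (length s <= enc_sit s)%nat.
Proof. induction s using rev_ind. simpl; lia. rewrite enc_snoc, length_app. simpl. lia. Qed.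

Lemma snoc_case (t : list bool) : t = [] \/ exists t' b, t = t' ++ [b].
Proof. destruct t as [|c t]. auto. right. destruct (exists_last (l := c :: t)) as [t' [b E]]. discriminate. eauto. Qed.

Lemma enc_inj s t : enc_sit s = enc_sit t -> s = t.
Proof.
  revert t. induction s using rev_ind; intros t H.
  - destruct (snoc_case t) as [->|[t' [b ->]]]. auto. rewrite enc_snoc in H. change (enc_sit []) with 0%nat in H. lia.
  - destruct (snoc_case t) as [->|[t' [b ->]]]. rewrite enc_snoc in H. change (enc_sit []) with 0%nat in H. lia.
    rewrite !enc_snoc in H. assert (enc_sit s = enc_sit t' /\ x = b).
    { destruct x, b; simpl in H; split; auto; lia. }
    destruct H0. subst. f_equal. auto.
Qed.

Definition dist a b := (a - b + (b - a))%nat.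
Definition fF e0 y := match dist y e0 with O => y | S _ => parent y end.
Definition cF e0 := cCond (cDist cId (cConst e0)) cId cParent.
Lemma comp_F e0 : comp1 (cF e0) (fF e0).
Proof. apply comp_cond. apply comp_dist. apply comp_id. apply comp_const. apply comp_id. apply comp_parent. Qed.

Definition ptest e0 x := dist (Nat.iter x (fF e0) x) e0.
Definition cPT e0 := cDist (cComp (cPrim cId (cComp (cF e0) cY)) (cPair cId cId)) (cConst e0).
Lemma prf_iter e0 x n : prf (fun x => x) (fun z => fF e0 (pi2 (pi2 z))) x n = Nat.iter n (fF e0) x.
Proof. induction n; simpl; auto. rewrite !pi2_pair, IHn. auto. Qed.
Lemma comp_PT e0 : comp1 (cPT e0) (ptest e0).
Proof.
  eapply comp_ext. apply comp_dist. apply comp_prim. apply comp_id. apply comp_comp. apply comp_F. apply comp_Y.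
  apply comp_id. apply comp_id. apply comp_const.
  intro x. unfold ptest. cbv beta. rewrite prf_iter. reflexivity.
Qed.

Definition pre_b (w0 s : sit) : bool := Nat.eqb (ptest (enc_sit w0) (enc_sit s)) 0.

Lemma dist0 a b : dist a b = 0%nat <-> a = b.
Proof. unfold dist; lia. Qed.

Lemma iter_fix e0 n : Nat.iter n (fF e0) e0 = e0.
Proof. induction n; simpl; auto. rewrite IHn. unfold fF. replace (dist e0 e0) with 0%nat; auto. unfold dist; lia. Qed.

Lemma iterA e0 n : forall s, exists u v, s = u ++ v /\ Nat.iter n (fF e0) (enc_sit s) = enc_sit u.
Proof.
  induction n; intro s. exists s, []. rewrite app_nil_r; auto.
  rewrite Nat.iter_succ_r. unfold fF at 2.
  destruct (dist (enc_sit s) e0). apply IHn.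
  destruct (snoc_case s) as [->|[s' [b ->]]].
  - change (enc_sit []) with 0%nat. rewrite parent0. destruct (IHn []) as [u [v [E1 E2]]]. exists u, v; auto.
  - rewrite parent_enc. destruct (IHn s') as [u [v [E1 E2]]]. exists u, (v ++ [b]). split; auto.
    rewrite E1, app_assoc. auto.
Qed.

Lemma iterB w0 n : forall t, (length t <= n)%nat -> Nat.iter n (fF (enc_sit w0)) (enc_sit (w0 ++ t)) = enc_sit w0.
Proof.
  induction n; intros t Hl.
  - destruct t; simpl in Hl; [|lia]. rewrite app_nil_r. auto.
  - rewrite Nat.iter_succ_r. destruct (snoc_case t) as [->|[t' [b ->]]].
    + rewrite app_nil_r. unfold fF at 2. replace (dist (enc_sit w0) (enc_sit w0)) with 0%nat by (unfold dist; lia).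
      apply iter_fix.
    + unfold fF at 2. destruct (dist (enc_sit (w0 ++ t' ++ [b])) (enc_sit w0)) eqn:E.
      * apply dist0, enc_inj in E. exfalso. apply (f_equal (@length bool)) in E. rewrite !length_app in E. simpl in E. lia.
      * rewrite app_assoc, parent_enc. apply IHn. rewrite length_app in Hl; simpl in Hl; lia.
Qed.

Lemma pre_b_spec w0 s : pre_b w0 s = true <-> exists t, s = w0 ++ t.
Proof.
  unfold pre_b, ptest. rewrite Nat.eqb_eq, dist0. split.
  - intro H. destruct (iterA (enc_sit w0) (enc_sit s) s) as [u [v [E1 E2]]].
    rewrite E2 in H. apply enc_inj in H. subst. eauto.
  - intros [t ->]. apply iterB. pose proof (enc_len (w0 ++ t)). rewrite length_app in H. lia.
Qed.

Lemma recQ_cond {D : Type} (enc : D -> nat) (q : D -> Q) (P : D -> bool) (tb : nat -> nat) (k : nat) :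
  recursive_nat tb -> (forall d, P d = true <-> tb (enc d) = 0%nat) -> recursive_Q enc q ->
  recursive_Q enc (fun d => if P d then (q d * (1 # Pos.of_succ_nat k))%Q else 1%Q).
Proof.
  intros [ct Hct] HP [a [b [c [[ca Ha] [[cb Hb] [[cc Hc] Hq]]]]]].
  exists (fun e => match tb e with O => a e | S _ => 1%nat end),
         (fun e => match tb e with O => b e | S _ => 0%nat end),
         (fun e => match tb e with O => (c e * S k + k)%nat | S _ => 0%nat end).
  split; [|split; [|split]].
  - exists (cCond ct ca (cConst 1)). apply comp_cond; auto. apply comp_const.
  - exists (cCond ct cb (cConst 0)). apply comp_cond; auto. apply comp_const.
  - exists (cCond ct (cAdd (cMul cc (S k)) (cConst k)) (cConst 0)). apply comp_cond; auto.
    apply comp_add. apply comp_mul; auto. apply comp_const. apply comp_const.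
  - intro d. destruct (P d) eqn:EP.
    + apply HP in EP. rewrite EP. rewrite (Hq d). unfold Qeq, Qmult; simpl.
      rewrite !Pos2Z.inj_mul, !Znat.Zpos_P_of_succ_nat, Znat.Nat2Z.inj_add, Znat.Nat2Z.inj_mul. nia.
    + destruct (tb (enc d)) eqn:E.
      * exfalso. assert (P d = true) by (apply HP; auto). congruence.
      * unfold Qeq; simpl. reflexivity.
Qed.

Open Scope R_scope.

Definition Tc (T : process) (w0 : sit) (c0 : R) : process :=
  fun s => if pre_b w0 s then T s / c0 else 1.

Lemma pre_b_snoc w0 s x : pre_b w0 (s ++ [x]) = true <-> pre_b w0 s = true \/ s ++ [x] = w0.
Proof.
  rewrite !pre_b_spec. split.
  - intros [t Ht]. destruct (snoc_case t) as [->|[t' [b ->]]].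
    + right. rewrite app_nil_r in Ht; auto.
    + left. exists t'. rewrite app_assoc in Ht. apply app_inj_tail in Ht. destruct Ht; auto.
  - intros [[t ->]|<-]. exists (t ++ [x]); rewrite app_assoc; auto. exists []; rewrite app_nil_r; auto.
Qed.

Lemma pre_b_len w0 s : pre_b w0 s = true -> (length w0 <= length s)%nat.
Proof. intro H. apply pre_b_spec in H. destruct H as [t ->]. rewrite length_app. lia. Qed.

Lemma pre_b_nil w0 : w0 <> [] -> pre_b w0 [] = false.
Proof.
  intro H. destruct (pre_b w0 []) eqn:E; auto. apply pre_b_spec in E. destruct E as [t Et].
  destruct w0; [congruence|discriminate].
Qed.

Lemma Tc_super T w0 c0 p q :
  (forall s, (length w0 <= length s)%nat -> forall r, p <= r <= q -> Ex r (Delta T s) <= 0) ->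
  0 <= p -> q <= 1 -> 0 < c0 -> T w0 <= c0 ->
  supermartingale (stationary (mkI p q)) (Tc T w0 c0).
Proof.
  intros H Hp Hq Hc Hw s r Hr. simpl in Hr. unfold Ex, Delta, Tc.
  assert (Hi : 0 < / c0) by (apply Rinv_0_lt_compat; lra).
  destruct (pre_b w0 s) eqn:E.
  - assert (E1 : forall x, pre_b w0 (s ++ [x]) = true) by (intro; apply pre_b_snoc; auto).
    rewrite !E1. pose proof (H s (pre_b_len _ _ E) r Hr) as H0. unfold Ex, Delta in H0.
    replace (T (s ++ [true]) / c0 - T s / c0) with ((T (s ++ [true]) - T s) * / c0) by (unfold Rdiv; ring).
    replace (T (s ++ [false]) / c0 - T s / c0) with ((T (s ++ [false]) - T s) * / c0) by (unfold Rdiv; ring).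
    nra.
  - assert (E1 : forall x, (if pre_b w0 (s ++ [x]) then T (s ++ [x]) / c0 else 1) - 1 <= 0).
    { intro x. destruct (pre_b w0 (s ++ [x])) eqn:E2; [|lra].
      apply pre_b_snoc in E2. destruct E2 as [E2|E2]; [congruence|]. rewrite E2.
      assert (T w0 / c0 <= 1); [|lra].
      rewrite <- (Rinv_r c0) by lra. unfold Rdiv. apply Rmult_le_compat_r; lra. }
    pose proof (E1 true). pose proof (E1 false). nra.
Qed.

Lemma Tc_test T w0 c0 : (forall s, 0 <= T s) -> 0 < c0 -> w0 <> [] -> test_process (Tc T w0 c0).
Proof.
  intros H Hc Hw. split.
  - intro s. unfold Tc. destruct (pre_b w0 s); [|lra]. unfold Rdiv. apply Rmult_le_pos; auto.
    left; apply Rinv_0_lt_compat; lra.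
  - unfold Tc. rewrite pre_b_nil; auto.
Qed.

Lemma length_prefix w n : length (prefix w n) = n.
Proof. unfold prefix. rewrite length_map, length_seq. auto. Qed.

Lemma prefix_ext w m n : (m <= n)%nat -> pre_b (prefix w m) (prefix w n) = true.
Proof.
  intro H. apply pre_b_spec. exists (map w (seq m (n - m))). unfold prefix.
  replace n with (m + (n - m))%nat at 1 by lia. rewrite seq_app, map_app. auto.
Qed.

Lemma prefix_nonnil w n : (0 < n)%nat -> prefix w n <> [].
Proof. intros H E. apply (f_equal (@length bool)) in E. rewrite length_prefix in E. simpl in E. lia. Qed.

Lemma Tc_blow T w m c0 : 0 < c0 ->
  (forall B N, exists n, (N <= n)%nat /\ B < T (prefix w n)) ->
  (forall B N, exists n, (N <= n)%nat /\ B < Tc T (prefix w m) c0 (prefix w n)).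
Proof.
  intros Hc H B N. destruct (H (B * c0) (max N m)) as [n [Hn HB]]. exists n. split; [lia|].
  unfold Tc. rewrite prefix_ext by lia.
  apply (Rmult_lt_reg_r c0); auto. unfold Rdiv. rewrite Rmult_assoc, Rinv_l, Rmult_1_r; lra.
Qed.

Lemma Tc_blowS T w m c0 (tau : nat -> R) : 0 < c0 ->
  (forall eps N, 0 < eps -> exists n, (N <= n)%nat /\ - eps < T (prefix w n) - tau n) ->
  (forall eps N, 0 < eps -> exists n, (N <= n)%nat /\ - eps < Tc T (prefix w m) c0 (prefix w n) - tau n / c0).
Proof.
  intros Hc H eps N He. destruct (H (eps * c0) (max N m)) as [n [Hn HB]]. nra. exists n. split; [lia|].
  unfold Tc. rewrite prefix_ext by lia.
  apply (Rmult_lt_reg_r c0); auto. unfold Rdiv. rewrite Rmult_minus_distr_r, !Rmult_assoc, Rinv_l, !Rmult_1_r; lra.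
Qed.

Lemma Q2R_1P k : Q2R (1 # Pos.of_succ_nat k) = / INR (S k).
Proof.
  unfold Q2R. simpl Qnum. simpl Qden. rewrite Znat.Zpos_P_of_succ_nat, INR_IZR_INZ, Znat.Nat2Z.inj_succ. lra.
Qed.
Lemma Q2R_one : Q2R 1 = 1.
Proof. unfold Q2R. simpl. lra. Qed.

Lemma cv_const c : Un_cv (fun _ => c) c.
Proof. intros e He. exists 0%nat. intros. unfold Rdist. rewrite Rminus_diag, Rabs_R0. auto. Qed.

Lemma cv_ext u v l : (forall n, u n = v n) -> Un_cv u l -> Un_cv v l.
Proof. intros E H e He. destruct (H e He) as [N HN]. exists N. intros n Hn. rewrite <- E. auto. Qed.

Lemma INRS_pos k : 0 < INR (S k).
Proof. apply lt_0_INR. lia. Qed.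

Lemma Qle_scale a b k : (a <= b)%Q -> (a * (1 # Pos.of_succ_nat k) <= b * (1 # Pos.of_succ_nat k))%Q.
Proof. intro H. apply Qmult_le_compat_r; auto. unfold Qle; simpl; lia. Qed.

Lemma inF_ML T w0 k : w0 <> [] -> in_F rML T -> in_F rML (Tc T w0 (INR (S k))).
Proof.
  intros Hw [HT [q [Hrec [Hmon Hcv]]]]. split.
  { apply Tc_test; auto. apply HT. apply INRS_pos. }
  exists (fun s n => if pre_b w0 s then (q s n * (1 # Pos.of_succ_nat k))%Q else 1%Q).
  split; [|split].
  - exact (recQ_cond (fun dn : sit * nat => cpair (enc_sit (fst dn)) (snd dn))
             (fun dn => q (fst dn) (snd dn)) (fun dn => pre_b w0 (fst dn))
             (fun y => ptest (enc_sit w0) (pi1 y)) k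
             (ex_intro _ (cComp (cPT (enc_sit w0)) cFst)
                (comp_comp _ _ (ptest (enc_sit w0)) pi1 (comp_PT _) comp_fst))
             (fun d => ltac:(cbv beta; rewrite pi1_pair; unfold pre_b; apply Nat.eqb_eq))
             Hrec).
  - intros s n. destruct (pre_b w0 s). apply Qle_scale; auto. apply Qle_refl.
  - intro s. unfold Tc. destruct (pre_b w0 s).
    + eapply cv_ext. 2: apply (CV_mult _ _ _ _ (Hcv s) (cv_const (/ INR (S k)))).
      intro n. cbv beta. rewrite Q2R_mult, Q2R_1P. auto.
    + eapply cv_ext. 2: apply cv_const. intro; cbv beta. symmetry; apply Q2R_one.
Qed.

Lemma inF_C T w0 k : w0 <> [] -> in_F rC T -> in_F rC (Tc T w0 (INR (S k))).
Proof.
  intros Hw [HT [Hpos [q [Hrec Heq]]]]. split; [|split].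
  { apply Tc_test; auto. apply HT. apply INRS_pos. }
  { intro s. unfold Tc. destruct (pre_b w0 s); [|lra]. unfold Rdiv. apply Rmult_lt_0_compat; auto.
    apply Rinv_0_lt_compat, INRS_pos. }
  exists (fun s => if pre_b w0 s then (q s * (1 # Pos.of_succ_nat k))%Q else 1%Q). split.
  - exact (recQ_cond enc_sit q (pre_b w0) (ptest (enc_sit w0)) k
             (ex_intro _ (cPT (enc_sit w0)) (comp_PT _))
             (fun d => ltac:(unfold pre_b; apply Nat.eqb_eq)) Hrec).
  - intro s. unfold Tc. destruct (pre_b w0 s).
    + rewrite Q2R_mult, Q2R_1P, <- Heq. auto.
    + symmetry; apply Q2R_one.
Qed.

Lemma inF_wML T w0 : w0 <> [] -> 0 < T w0 -> in_F rwML T -> in_F rwML (Tc T w0 (T w0)).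
Proof.
  intros Hw Hpos [HT [D [HD0 [[q [Hrec [Hmon Hcv]]] Hprod]]]]. split.
  { apply Tc_test; auto. apply HT. }
  exists (fun s x => if pre_b w0 s then D s x else 1). split; [|split].
  - intros s x. destruct (pre_b w0 s); auto. lra.
  - exists (fun sx n => if pre_b w0 (fst sx) then (q sx n * (1 # Pos.of_succ_nat 0))%Q else 1%Q).
    split; [|split].
    + exact (recQ_cond (fun dn : (sit * bool) * nat => cpair (enc_sx (fst dn)) (snd dn))
             (fun dn => q (fst dn) (snd dn)) (fun dn => pre_b w0 (fst (fst dn)))
             (fun y => ptest (enc_sit w0) (pi1 (pi1 y))) 0
             (ex_intro _ (cComp (cPT (enc_sit w0)) (cComp cFst cFst))
                (comp_comp _ _ (ptest (enc_sit w0)) (fun y => pi1 (pi1 y)) (comp_PT _)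
                   (comp_comp _ _ pi1 pi1 comp_fst comp_fst)))
             (fun d => ltac:(cbv beta; unfold enc_sx; rewrite !pi1_pair; unfold pre_b; apply Nat.eqb_eq))
             Hrec).
    + intros [s0 x0] n. cbv beta. simpl fst. destruct (pre_b w0 s0). apply Qle_scale; auto. apply Qle_refl.
    + intros [s x]. simpl fst; simpl snd. destruct (pre_b w0 s).
      * replace (D s x) with (D (fst (s, x)) (snd (s, x)) * / INR (S 0)) by (simpl; rewrite Rinv_1; ring).
        eapply cv_ext. 2: apply (CV_mult _ _ _ _ (Hcv (s, x)) (cv_const (/ INR (S 0)))).
        intro n. cbv beta. rewrite Q2R_mult, Q2R_1P. auto.
      * eapply cv_ext. 2: apply cv_const. intro; cbv beta. symmetry; apply Q2R_one.
  - intros s x. unfold Tc. destruct (pre_b w0 s) eqn:E.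
    + assert (E1 : pre_b w0 (s ++ [x]) = true) by (apply pre_b_snoc; auto). rewrite E1, Hprod.
      unfold Rdiv. ring.
    + destruct (pre_b w0 (s ++ [x])) eqn:E2.
      * apply pre_b_snoc in E2. destruct E2 as [E2|E2]; [congruence|]. rewrite E2. field. lra.
      * ring.
Qed.

Lemma growth_scale tau k : growth_function tau -> growth_function (fun n => tau n / INR (S k)).
Proof.
  intros [[q [Hrec Happ]] [H0 [Hm Hu]]]. pose proof (INRS_pos k) as Hk.
  assert (Hi : 0 < / INR (S k)) by (apply Rinv_0_lt_compat; auto).
  split; [|split; [|split]].
  - exists (fun n j => (q n j * (1 # Pos.of_succ_nat k))%Q). split.
    + exact (recQ_cond (fun dn : nat * nat => cpair (fst dn) (snd dn))
             (fun dn => q (fst dn) (snd dn)) (fun _ => true) (fun _ => 0%nat) k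
             (ex_intro _ cZero comp_zero) (fun d => ltac:(split; auto)) Hrec).
    + intros n j. rewrite Q2R_mult, Q2R_1P. unfold Rdiv.
      rewrite <- Rmult_minus_distr_r, Rabs_mult, (Rabs_right (/ INR (S k))) by lra.
      pose proof (Happ n j). assert (/ INR (S k) <= 1).
      { rewrite <- Rinv_1. apply Rinv_le_contravar; [lra|]. rewrite S_INR. pose proof (pos_INR k). lra. }
      assert (0 < / 2 ^ j) by (apply Rinv_0_lt_compat, pow_lt; lra).
      pose proof (Rabs_pos (tau n - Q2R (q n j))). nra.
  - intro n. unfold Rdiv. apply Rmult_le_pos; auto. lra.
  - intros n m Hnm. unfold Rdiv. apply Rmult_le_compat_r; auto. lra.
  - intro B. destruct (Hu (B * INR (S k))) as [n Hn]. exists n.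
    apply (Rmult_lt_reg_r (INR (S k))); auto. unfold Rdiv. rewrite Rmult_assoc, Rinv_l, Rmult_1_r; lra.
Qed.

Lemma SrF_len F r s s' : length s = length s' -> SrF F r s = SrF F r s'.
Proof.
  intro E. unfold SrF.
  destruct (excluded_middle_informative _) as [[x Hx]|H1];
  destruct (excluded_middle_informative _) as [[y Hy]|H2]; auto; exfalso.
  - apply H2. exists x. rewrite <- E. auto.
  - apply H1. exists y. rewrite E. auto.
Qed.

Lemma SrF_true F r s : SrF F r s = true -> exists s', length s' = length s /\ 0 < Ex r (Delta F s').
Proof. unfold SrF. destruct (excluded_middle_informative _); auto. discriminate. Qed.

Lemma SrF_false F r s : SrF F r s = false -> forall s', length s' = length s -> Ex r (Delta F s') <= 0.
Proof.
  unfold SrF. destruct (excluded_middle_informative _) as [_|H]. discriminate.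
  intros _ s' E. apply Rnot_lt_le. intro H'. apply H. eauto.
Qed.

Lemma rsum_ext f g n : (forall k, f k = g k) -> rsum f n = rsum g n.
Proof. intro E. induction n; simpl; auto. rewrite IHn, E. auto. Qed.

Lemma rsum_scale f c n : rsum (fun k => f k * c) n = rsum f n * c.
Proof. induction n; simpl. ring. rewrite IHn. ring. Qed.

Lemma rsum_mono f m n : (forall k, 0 <= f k) -> (m <= n)%nat -> rsum f m <= rsum f n.
Proof.
  intros H Hmn. induction Hmn. lra. simpl. pose proof (H m0). lra.
Qed.

Lemma b2R_pos b : 0 <= b2R b.
Proof. destruct b; simpl; lra. Qed.

Lemma rsum_unb (b : nat -> bool) : (forall N, exists n, (N <= n)%nat /\ b n = true) ->
  forall B, exists N, forall n, (N <= n)%nat -> B < rsum (fun k => b2R (b k)) n.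
Proof.
  intros H.
  assert (Hm : forall m, exists N, INR m <= rsum (fun k => b2R (b k)) N).
  { induction m. exists 0%nat. simpl. lra.
    destruct IHm as [N HN]. destruct (H N) as [n [Hn Hb]]. exists (S n).
    rewrite S_INR; cbn [rsum]; rewrite Hb; cbn [b2R].
    pose proof (rsum_mono (fun k => b2R (b k)) N n (fun k => b2R_pos _) Hn). lra. }
  intro B. destruct (INR_unbounded B) as [m Hmb]. destruct (Hm m) as [N HN]. exists N.
  intros n Hn. pose proof (rsum_mono (fun k => b2R (b k)) N n (fun k => b2R_pos _) Hn). lra.
Qed.

Lemma sel_finite Ss I varpi F r (val : bool) :
  sel_random Ss (stationary I) varpi -> Ss (SrF F r) -> 0 < ilo I -> ihi I < 1 ->
  (forall k, SrF F r (prefix varpi k) = true -> varpi k = val) ->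
  exists N, forall n, (N <= n)%nat -> SrF F r (prefix varpi n) = false.
Proof.
  intros Hsel HS Hlo Hhi Hval. apply NNPP. intro Hn.
  assert (Hinf : forall N, exists n, (N <= n)%nat /\ SrF F r (prefix varpi n) = true).
  { intro N. apply NNPP. intro H. apply Hn. exists N. intros n Hn'.
    destruct (SrF F r (prefix varpi n)) eqn:E; auto. exfalso. apply H. eauto. }
  set (b := fun k => SrF F r (prefix varpi k)) in *.
  pose proof (rsum_unb b Hinf) as Hunb.
  pose proof (Hsel (SrF F r) HS) as H. cbv zeta in H. specialize (H Hunb).
  destruct H as [Hlow Hup]. simpl in Hlow, Hup.
  destruct (Hunb 0) as [N0 HN0].
  destruct val.
  - destruct (Hup (1 - ihi I)) as [N1 HN1]. lra.
    specialize (HN1 (max N0 N1) ltac:(lia)). specialize (HN0 (max N0 N1) ltac:(lia)).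
    rewrite (rsum_ext _ (fun k => b2R (b k) * (1 - ihi I))) in HN1.
    + rewrite rsum_scale in HN1. unfold b in *.
      set (c := rsum (fun k => b2R (SrF F r (prefix varpi k))) (max N0 N1)) in *.
      replace (c * (1 - ihi I) / c) with (1 - ihi I) in HN1 by (field; lra). lra.
    + intro k. unfold b. destruct (SrF F r (prefix varpi k)) eqn:E; simpl.
      rewrite (Hval k E). simpl. unfold stationary. ring. unfold stationary. ring.
  - destruct (Hlow (ilo I)) as [N1 HN1]. lra.
    specialize (HN1 (max N0 N1) ltac:(lia)). specialize (HN0 (max N0 N1) ltac:(lia)).
    rewrite (rsum_ext _ (fun k => b2R (b k) * (- ilo I))) in HN1.
    + rewrite rsum_scale in HN1. unfold b in *.
      set (c := rsum (fun k => b2R (SrF F r (prefix varpi k))) (max N0 N1)) in *.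
      replace (c * (- ilo I) / c) with (- ilo I) in HN1 by (field; lra). lra.
    + intro k. unfold b. destruct (SrF F r (prefix varpi k)) eqn:E; simpl.
      rewrite (Hval k E). simpl. unfold stationary. ring. unfold stationary. ring.
Qed.

Lemma Ex_interval p q r f : Ex p f <= 0 -> Ex q f <= 0 -> p <= r <= q -> Ex r f <= 0.
Proof.
  unfold Ex. intros H1 H2 Hr.
  destruct (Rle_dec 0 (f true - f false)); nra.
Qed.

Lemma keyN Rt p q I Ss varpi T :
  p < q -> 0 < ilo I -> ihi I < 1 ->
  (forall Sl, Spq Rt p q Sl -> Ss Sl) ->
  sel_random Ss (stationary I) varpi ->
  in_F Rt T -> supermartingale (phi_pq varpi p q) T ->
  exists N, forall s, (N <= length s)%nat -> forall r, p <= r <= q -> Ex r (Delta T s) <= 0.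
Proof.
  intros Hpq Hlo Hhi HSS Hsel HF HS.
  assert (Hp : exists N, forall n, (N <= n)%nat -> SrF T p (prefix varpi n) = false).
  { apply (sel_finite Ss I varpi T p true Hsel); auto.
    - apply HSS. exists T, p. auto.
    - intros k Hk. apply SrF_true in Hk. destruct Hk as [s' [E H]]. rewrite length_prefix in E.
      destruct (varpi k) eqn:Ev; auto. exfalso.
      assert (Ex p (Delta T s') <= 0); [|lra].
      apply HS. unfold phi_pq. rewrite E, Ev. simpl. lra. }
  assert (Hq : exists N, forall n, (N <= n)%nat -> SrF T q (prefix varpi n) = false).
  { apply (sel_finite Ss I varpi T q false Hsel); auto.
    - apply HSS. exists T, q. auto.
    - intros k Hk. apply SrF_true in Hk. destruct Hk as [s' [E H]]. rewrite length_prefix in E.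
      destruct (varpi k) eqn:Ev; auto. exfalso.
      assert (Ex q (Delta T s') <= 0); [|lra].
      apply HS. unfold phi_pq. rewrite E, Ev. simpl. lra. }
  destruct Hp as [Np HNp], Hq as [Nq HNq]. exists (max Np Nq). intros s Hs r Hr.
  apply (Ex_interval p q); auto.
  - apply (SrF_false T p (prefix varpi (length s))). apply HNp. lia. rewrite length_prefix. auto.
  - apply (SrF_false T q (prefix varpi (length s))). apply HNq. lia. rewrite length_prefix. auto.
Qed.

Lemma super_sub varpi p q T : supermartingale (stationary (mkI p q)) T -> supermartingale (phi_pq varpi p q) T.
Proof.
  intros H s r Hr. apply H. simpl. unfold phi_pq in Hr.
  destruct (varpi (length s)); simpl in Hr.
Abort.

From Stdlib Require Import Reals QArith Qreals List ClassicalEpsilon.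
Open Scope R_scope.

Theorem theorem29 (Rt : rtype) (p q : R) (I : interval)
  (Ss : selection -> Prop) (varpi : path) :
  0 <= p -> p < q -> q <= 1 ->
  0 < ilo I -> ilo I <= ihi I -> ihi I < 1 ->
  countable_set Ss ->
  (forall Sl, Spq Rt p q Sl -> Ss Sl) ->
  sel_random Ss (stationary I) varpi ->
  forall omega : path,
    random Rt (phi_pq varpi p q) omega <-> random Rt (stationary (mkI p q)) omega.
Proof.
  intros Hp Hpq Hq Hlo Hle Hhi Hcnt HSS Hsel omega.
  assert (Hsub : forall T, supermartingale (stationary (mkI p q)) T -> supermartingale (phi_pq varpi p q) T).
  { intros T H s r Hr. apply H. simpl. unfold phi_pq in Hr. destruct (varpi (length s)); simpl in Hr; lra. }
  split.
  - intro Hr. destruct Rt; unfold random in *.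
    + intros [T [[HF HS] Hb]]. apply Hr. exists T. split; [split|]; auto.
    + intros [T [[HF HS] Hb]]. apply Hr. exists T. split; [split|]; auto.
    + intros [T [[HF HS] Hb]]. apply Hr. exists T. split; [split|]; auto.
    + intros [T [tau [[HF HS] Hb]]]. apply Hr. exists T, tau. split; [split|]; auto.
  - intro Hr. destruct Rt; unfold random in *.
    + intros [T [[HF HS] Hb]]. apply Hr.
      destruct (keyN rML p q I Ss varpi T Hpq Hlo Hhi HSS Hsel HF HS) as [N HN].
      set (w0 := prefix omega (S N)).
      destruct (INR_unbounded (T w0)) as [k Hk].
      exists (Tc T w0 (INR (S k))). split; [split|].
      * apply inF_ML; auto. apply prefix_nonnil; lia.
      * apply Tc_super; auto.
        -- intros s Hs. apply HN. unfold w0 in Hs; rewrite length_prefix in Hs; lia.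
        -- apply INRS_pos.
        -- rewrite S_INR; lra.
      * apply Tc_blow; auto. apply INRS_pos.
    + intros [T [[HF HS] Hb]]. apply Hr.
      destruct (keyN rwML p q I Ss varpi T Hpq Hlo Hhi HSS Hsel HF HS) as [N HN].
      destruct (Hb 0 (S N)) as [n0 [Hn0 Hpos]].
      set (w0 := prefix omega n0).
      exists (Tc T w0 (T w0)). split; [split|].
      * apply inF_wML; auto. apply prefix_nonnil; lia.
      * apply Tc_super; auto.
        -- intros s Hs. apply HN. unfold w0 in Hs; rewrite length_prefix in Hs; lia.
        -- lra.
      * apply Tc_blow; auto.
    + intros [T [[HF HS] Hb]]. apply Hr.
      destruct (keyN rC p q I Ss varpi T Hpq Hlo Hhi HSS Hsel HF HS) as [N HN].
      set (w0 := prefix omega (S N)).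
      destruct (INR_unbounded (T w0)) as [k Hk].
      exists (Tc T w0 (INR (S k))). split; [split|].
      * apply inF_C; auto. apply prefix_nonnil; lia.
      * apply Tc_super; auto.
        -- intros s Hs. apply HN. unfold w0 in Hs; rewrite length_prefix in Hs; lia.
        -- apply INRS_pos.
        -- rewrite S_INR; lra.
      * apply Tc_blow; auto. apply INRS_pos.
    + intros [T [tau [[HF HS] [Hg Hb]]]]. apply Hr.
      destruct (keyN rS p q I Ss varpi T Hpq Hlo Hhi HSS Hsel HF HS) as [N HN].
      set (w0 := prefix omega (S N)).
      destruct (INR_unbounded (T w0)) as [k Hk].
      exists (Tc T w0 (INR (S k))), (fun n => tau n / INR (S k)). split; [split|split].
      * exact (inF_C T w0 k ltac:(apply prefix_nonnil; lia) HF).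
      * apply Tc_super; auto.
        -- intros s Hs. apply HN. unfold w0 in Hs; rewrite length_prefix in Hs; lia.
        -- apply INRS_pos.
        -- rewrite S_INR; lra.
      * apply growth_scale; auto.
      * apply Tc_blowS; auto. apply INRS_pos.
Qed.
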